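(* Let $M$ be a loopless matroid on ground set $S$ and consider a standard coloring of $M$. Let $Z\subseteq S$ be a subset such that exactly $r_M(Z)$ colors appear in $Z$. Then the coloring restricted to $Z$ is a standard coloring of $M|Z$.
   Context: A coloring is a partition of the ground set into nonempty color classes. A coloring of a rank-$r$ matroid $N$ with color classes $S_1,\dots,S_r$ (so exactly $r$ colors) is standard if, after possibly reindexing the classes, $S_i$ is a cut of the restriction $N|(S_1\cup\dots\cup S_i)$ for every $i=1,\dots,r$, where a cut is an inclusionwise minimal subset of the ground set intersecting every basis. *)

(* Defs.v *)
From mathcomp Require Import all_boot.
Set Implicit Arguments. Unset Strict Implicit. Unset Printing Implicit Defensive.

Section Matroids.
Variable T : finType.

Definition is_matroid (E : {set T}) (I : {set {set T}}) : Prop :=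
  [/\ forall A : {set T}, A \in I -> A \subset E,
      set0 \in I,
      forall A B : {set T}, A \in I -> B \subset A -> B \in I
    & forall A B : {set T}, A \in I -> B \in I -> #|A| < #|B| ->
        exists2 x, x \in B :\: A & x |: A \in I].

Definition loopless (E : {set T}) (I : {set {set T}}) : Prop :=
  forall x, x \in E -> [set x] \in I.

Definition rank (I : {set {set T}}) (X : {set T}) : nat :=
  \max_(A in I | A \subset X) #|A|.

Definition restrict (I : {set {set T}}) (Z : {set T}) : {set {set T}} :=
  [set A in I | A \subset Z].

Definition basis (I : {set {set T}}) (X : {set T}) (B : {set T}) : bool :=
  maxset (fun A : {set T} => (A \in I) && (A \subset X)) B.

Definition cut (I : {set {set T}}) (X : {set T}) (C : {set T}) : bool :=
  minset (fun D : {set T} => (D \subset X) &&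
            [forall B : {set T}, basis I X B ==> ~~ [disjoint D & B]]) C.

Definition coloring (E : {set T}) (P : {set {set T}}) : bool := partition P E.

Definition standard_coloring (E : {set T}) (I : {set {set T}})
    (P : {set {set T}}) : Prop :=
  [/\ coloring E P,
      #|P| = rank I E
    & exists s : seq {set T},
        [/\ uniq s, P = [set A in s] &
            forall i, i < size s ->
              cut I (\bigcup_(j < i.+1) nth set0 s j) (nth set0 s i)]].

Definition restrict_coloring (P : {set {set T}}) (Z : {set T}) : {set {set T}} :=
  [set A :&: Z | A in P & ~~ [disjoint A & Z]].

Definition colors_in (P : {set {set T}}) (Z : {set T}) : {set {set T}} :=
  [set A in P | ~~ [disjoint A & Z]].

End Matroids.

(* Main.v *)
Require Import Defs.
From mathcomp Require Import all_boot zify.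
Set Implicit Arguments. Unset Strict Implicit. Unset Printing Implicit Defensive.

Lemma rank_ge (T : finType) (I : {set {set T}}) (X A : {set T}) :
  A \in I -> A \subset X -> #|A| <= rank I X.
Proof.
move=> hA hAX; rewrite /rank.
by apply: (leq_bigmax_cond (P := fun A => (A \in I) && (A \subset X))); rewrite hA hAX.
Qed.

Lemma rank_wit (T : finType) (E : {set T}) (I : {set {set T}}) (X : {set T}) :
  is_matroid E I -> exists2 A, (A \in I) && (A \subset X) & #|A| = rank I X.
Proof.
case=> _ h0 _ _; rewrite /rank.
have P0 : (set0 \in I) && (set0 \subset X) by rewrite h0 sub0set.
rewrite (bigmax_eq_arg (P := fun A => (A \in I) && (A \subset X)) _ P0).
case: arg_maxnP => // A PA _.
by exists A.
Qed.

Lemma rank_mono (T : finType) (I : {set {set T}}) (X Y : {set T}) :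
  X \subset Y -> rank I X <= rank I Y.
Proof.
move=> hXY; rewrite /rank; apply/bigmax_leqP => A /andP[hA hAX].
by apply: rank_ge => //; apply: subset_trans hXY.
Qed.

Lemma extend (T : finType) (E : {set T}) (I : {set {set T}}) (X J : {set T}) :
  is_matroid E I -> J \in I -> J \subset X ->
  exists K : {set T}, [/\ J \subset K, K \in I, K \subset X & #|K| = rank I X].
Proof.
move=> hM; have [_ _ hher haug] := hM.
move eq: (rank I X - #|J|) => n; elim: n J eq => [|n IH] J eq hJ hJX.
  exists J; split => //; have := rank_ge hJ hJX; lia.
have [A /andP[hA hAX] hcA] := rank_wit X hM.
have hlt : #|J| < #|A| by lia.
have [x /setDP[xA xJ] hxJ] := haug J A hJ hA hlt.
have hc : #|x |: J| = #|J|.+1 by rewrite cardsU1 xJ.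
have [||K [h1 h2 h3 h4]] := IH (x |: J) _ hxJ.
- lia.
- by rewrite subUset sub1set (subsetP hAX) // hJX.
exists K; split => //; apply: subset_trans h1; exact: subsetUr.
Qed.

Lemma basisP (T : finType) (E : {set T}) (I : {set {set T}}) (X B : {set T}) :
  is_matroid E I ->
  basis I X B = [&& B \in I, B \subset X & #|B| == rank I X].
Proof.
move=> hM; apply/idP/idP.
  move/maxsetP=> [/andP[hB hBX] hmax].
  have [K [hBK hK hKX hc]] := extend hM hB hBX.
  have eKB := hmax K (introT andP (conj hK hKX)) hBK.
  by rewrite -eKB hK hKX hc eqxx.
move/and3P=> [hB hBX /eqP hc]; apply/maxsetP; split; first by rewrite hB hBX.
move=> B' /andP[hB' hB'X] hsub; apply/eqP; rewrite eq_sym eqEcard hsub /= hc.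
exact: rank_ge.
Qed.

Lemma meets_bases (T : finType) (E : {set T}) (I : {set {set T}}) (X D : {set T}) :
  is_matroid E I ->
  [forall B, basis I X B ==> ~~ [disjoint D & B]] = (rank I (X :\: D) < rank I X).
Proof.
move=> hM; apply/forallP/idP.
  move=> h; rewrite ltnNge; apply/negP => hle.
  have [A /andP[hA hAX] hc] := rank_wit (X :\: D) hM.
  have hAX' : A \subset X by apply: subset_trans hAX (subsetDl _ _).
  have hb : basis I X A.
    rewrite (basisP _ _ hM) hA hAX' /= eqn_leq rank_ge //= hc //.
  move: (h A); rewrite hb /= => /negP; apply.
  by move: hAX; rewrite subsetD disjoint_sym => /andP[].
move=> hlt B; apply/implyP; rewrite (basisP _ _ hM) => /and3P[hB hBX /eqP hc].
apply/negP => hd.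
have : B \subset X :\: D by rewrite subsetD hBX disjoint_sym.
move/(rank_ge hB); rewrite hc; lia.
Qed.

Lemma submod (T : finType) (E : {set T}) (I : {set {set T}}) (X Y : {set T}) :
  is_matroid E I ->
  rank I (X :|: Y) + rank I (X :&: Y) <= rank I X + rank I Y.
Proof.
move=> hM; have [_ _ hher _] := hM.
have [J /andP[hJ hJXY] hcJ] := rank_wit (X :&: Y) hM.
have hJU : J \subset X :|: Y.
  by apply: subset_trans hJXY _; apply: subset_trans (subsetIl _ _) (subsetUl _ _).
have [K [hJK hK hKU hcK]] := extend hM hJ hJU.
have h1 := rank_ge (hher _ _ hK (subsetIl K X)) (subsetIr K X).
have h2 := rank_ge (hher _ _ hK (subsetIl K Y)) (subsetIr K Y).
have h3 := cardsUI (K :&: X) (K :&: Y).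
have e1 : (K :&: X) :|: (K :&: Y) = K by rewrite -setIUr; apply/setIidPl.
have h4 : J \subset (K :&: X) :&: (K :&: Y).
  apply/subsetP => x xJ; have xK := subsetP hJK x xJ.
  have := subsetP hJXY x xJ; rewrite !inE xK => /andP[-> ->]; done.
have h5 := subset_leq_card h4.
rewrite e1 in h3; lia.
Qed.

Lemma cut_char_l (T : finType) (E : {set T}) (I : {set {set T}}) (X C : {set T}) :
  is_matroid E I -> cut I X C ->
  [/\ C \subset X, rank I (X :\: C) < rank I X &
      forall x, x \in C -> rank I X <= rank I (x |: (X :\: C))].
Proof.
move=> hM /minsetP [/andP[hCX hf] hmin].
rewrite (meets_bases _ _ hM) in hf; split => // x xC.
have xX := subsetP hCX x xC.
rewrite leqNgt; apply/negP => hlt.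
have e : X :\: (C :\ x) = x |: (X :\: C).
  apply/setP => y; rewrite !inE; case: (eqVneq y x) => [->|] //=; by rewrite xX orbT.
have := hmin (C :\ x); rewrite /= (subset_trans (subsetDl C _) hCX) /= (meets_bases _ _ hM) e.
move=> /(_ hlt (subsetDl _ _)) /setP /(_ x); by rewrite !inE eqxx xC.
Qed.

Lemma cut_char_r (T : finType) (E : {set T}) (I : {set {set T}}) (X C : {set T}) :
  is_matroid E I -> C \subset X -> rank I (X :\: C) < rank I X ->
  (forall x, x \in C -> rank I X <= rank I (x |: (X :\: C))) -> cut I X C.
Proof.
move=> hM hCX hlt hcl; apply/minsetP; split.
  by rewrite /= hCX (meets_bases _ _ hM).
move=> D /andP[hDX]; rewrite (meets_bases _ _ hM) => hlt' hDC.
apply/eqP; rewrite eqEsubset hDC /=.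
apply/subsetP => x xC; apply/negPn/negP => xD.
have hs : x |: (X :\: C) \subset X :\: D.
  apply/subsetP => y; rewrite !inE; case: (eqVneq y x) => [->|_] /=.
    by rewrite xD (subsetP hCX).
  case/andP=> yC ->; rewrite andbT; apply/negP => yD; move/negP: yC; apply.
  exact: (subsetP hDC).
have := rank_mono I hs; have := hcl x xC; lia.
Qed.

Lemma restrict_pred (T : finType) (I : {set {set T}}) (Z X A : {set T}) :
  X \subset Z -> (A \in restrict I Z) && (A \subset X) = (A \in I) && (A \subset X).
Proof.
move=> hXZ; rewrite /restrict inE -andbA.
case hAX: (A \subset X); rewrite ?andbF ?andbT //. by rewrite (subset_trans (idP hAX) hXZ) andbT.
Qed.

Lemma rank_restrict (T : finType) (I : {set {set T}}) (Z X : {set T}) :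
  X \subset Z -> rank (restrict I Z) X = rank I X.
Proof.
by move=> hXZ; rewrite /rank; apply: eq_bigl => A; rewrite restrict_pred.
Qed.

Lemma cut_restrict (T : finType) (I : {set {set T}}) (Z X C : {set T}) :
  X \subset Z -> cut (restrict I Z) X C = cut I X C.
Proof.
move=> hXZ; rewrite /cut; apply: minset_eq => D /=; congr (_ && _).
apply: eq_forallb => B; congr (_ ==> _).
by rewrite /basis; apply: maxset_eq => A /=; rewrite restrict_pred.
Qed.

Definition scover (T : finType) (s : seq {set T}) : {set T} := \bigcup_(A <- s) A.

Lemma mem_scover (T : finType) (x : T) (s : seq {set T}) :
  (x \in scover s) = has (fun A : {set T} => x \in A) s.
Proof.
elim: s => [|A s IH]; first by rewrite /scover big_nil inE.
by rewrite /scover big_cons inE -/(scover s) IH.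
Qed.

Lemma scover_rcons (T : finType) (s : seq {set T}) C :
  scover (rcons s C) = scover s :|: C.
Proof. by rewrite /scover -cats1 big_cat big_seq1. Qed.

Lemma bigcup_nth (T : finType) (s : seq {set T}) n :
  \bigcup_(j < n) nth set0 s j = scover (take n s).
Proof.
elim: n => [|n IH]; first by rewrite big_ord0 take0 /scover big_nil.
rewrite big_ord_recr /= IH; case: (ltnP n (size s)) => h.
  by rewrite (take_nth set0 h) scover_rcons.
by rewrite nth_default // !take_oversize ?setU0 // (leq_trans h).
Qed.

Definition std (T : finType) (I : {set {set T}}) (s : seq {set T}) :=
  forall i, i < size s -> cut I (\bigcup_(j < i.+1) nth set0 s j) (nth set0 s i).

Lemma std_rcons (T : finType) (I : {set {set T}}) s C :
  std I (rcons s C) <-> std I s /\ cut I (scover s :|: C) C.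
Proof.
split.
  move=> h; split.
    move=> i hi; have := h i; rewrite size_rcons ltnS (ltnW hi) nth_rcons hi.
    rewrite !bigcup_nth -cats1 takel_cat //; by apply.
  have := h (size s); rewrite size_rcons ltnSn nth_rcons ltnn eqxx bigcup_nth.
  by rewrite take_oversize ?size_rcons // scover_rcons; apply.
case=> hs hc i; rewrite size_rcons ltnS leq_eqVlt => /orP[/eqP->|hi].
  by rewrite bigcup_nth take_oversize ?size_rcons // scover_rcons nth_rcons ltnn eqxx.
rewrite nth_rcons hi bigcup_nth -cats1 takel_cat // -bigcup_nth; exact: hs.
Qed.

Definition fZ (T : finType) (Z : {set T}) (s : seq {set T}) :=
  [seq A :&: Z | A : {set T} <- s & ~~ [disjoint A & Z]].

Lemma scover_fZ (T : finType) (Z : {set T}) s : scover (fZ Z s) = Z :&: scover s.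
Proof.
elim: s => [|A s IH]; first by rewrite /scover !big_nil setI0.
rewrite /fZ /scover /=; case: ifP => h; rewrite ?big_cons -/(fZ Z s) -!/(scover _) IH setIUr.
  by rewrite setIC.
by move/negbFE: h; rewrite disjoint_sym -setI_eq0 => /eqP ->; rewrite set0U.
Qed.

Lemma disjointP (T : finType) (A B : {set T}) :
  reflect (forall x, x \in A -> x \in B -> False) [disjoint A & B].
Proof.
apply: (iffP pred0P) => h x.
  by move=> xA xB; have := h x; rewrite /= xA xB.
by apply/negP => /andP[xA xB]; exact: h x xA xB.
Qed.

Lemma key (T : finType) (E : {set T}) (I : {set {set T}}) (Z : {set T}) :
  is_matroid E I -> forall s : seq {set T}, uniq s ->
  (forall A B, A \in s -> B \in s -> A != B -> [disjoint A & B]) ->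
  std I s ->
  size (fZ Z s) <= rank I (Z :&: scover s) /\
  (rank I (Z :&: scover s) = size (fZ Z s) -> std I (fZ Z s)).
Proof.
move=> hM; elim/last_ind => [|s C IH] huniq hdisj hstd.
  by split => // _ i.
move: huniq; rewrite rcons_uniq => /andP[hCs hus].
have hdisj' : forall A B, A \in s -> B \in s -> A != B -> [disjoint A & B].
  by move=> A B hA hB; apply: hdisj; rewrite mem_rcons inE ?hA ?hB orbT.
move/std_rcons: hstd => [hs hcut].
have [IH1 IH2] := IH hus hdisj' hs.
have hCU : [disjoint C & scover s].
  apply/disjointP => x xC; rewrite mem_scover => /hasP[A As xA].
  have hAC : A != C by apply: contraNneq hCs => <-.
  have := hdisj A C; rewrite !mem_rcons !inE As eqxx orbT => /(_ erefl erefl hAC).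
  by move/disjointP => /(_ x xA xC).
have hUC : (scover s :|: C) :\: C = scover s.
  apply/setP => x; rewrite !inE; case xC: (x \in C); rewrite /= ?orbT ?orbF //.
  by rewrite (disjointFr hCU xC).
have [hCX hlt hcl] := cut_char_l hM hcut; rewrite hUC in hlt hcl.
rewrite /fZ filter_rcons -/(fZ Z s) scover_rcons; case: ifP => hm; last first.
  have e : Z :&: (scover s :|: C) = Z :&: scover s.
    move/negbFE: hm; rewrite -setI_eq0 => /eqP hCZ.
    by rewrite setIUr [Z :&: C]setIC hCZ setU0.
  by rewrite e.
rewrite map_rcons size_rcons -/(fZ Z s).
set Z0 := Z :&: scover s.
have hZ0U : Z0 \subset scover s by apply: subsetIr.
have hineq : forall y, y \in C -> y \in Z -> rank I Z0 < rank I (y |: Z0).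
  move=> y yC yZ.
  have yU : y \notin scover s by rewrite (disjointFr hCU yC).
  have := submod (y |: Z0) (scover s) hM.
  have -> : (y |: Z0) :|: scover s = y |: scover s.
    by rewrite -setUA (setUidPr hZ0U).
  have -> : (y |: Z0) :&: scover s = Z0.
    by rewrite setIUl (setIidPl hZ0U) (_ : [set y] :&: scover s = set0) ?set0U //;
       apply/eqP; rewrite setI_eq0; apply/disjointP => z; rewrite inE => /eqP -> ; apply/negP.
  have := hcl y yC; lia.
have [y yC yZ] : exists2 y, y \in C & y \in Z.
  move: hm; rewrite -setI_eq0 => /set0Pn [y]; rewrite inE => /andP[? ?]; by exists y.
set Z1 := Z :&: (scover s :|: C).
have hyZ1 : forall y, y \in C -> y \in Z -> y |: Z0 \subset Z1.
  move=> y' y'C y'Z; rewrite subUset sub1set !inE y'Z y'C orbT /=.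
  by apply: setIS; apply: subsetUl.
have hZ01 := rank_mono I (hyZ1 y yC yZ).
have h1 := hineq y yC yZ. move: IH1 hZ01 h1; rewrite -/Z0 -/Z1 => IH1 hZ01 h1.
split; first by lia.
move=> hr.
have hr0 : rank I Z0 = size (fZ Z s) by lia.
apply/std_rcons; split; first exact: IH2 hr0.
rewrite scover_fZ -/Z0.
have e1 : Z0 :|: C :&: Z = Z1 by rewrite /Z0 /Z1 setIUr [C :&: Z]setIC.
have e2 : (Z0 :|: C :&: Z) :\: (C :&: Z) = Z0.
  apply/setP => x; rewrite !inE; case xC: (x \in C); rewrite /= ?andbF ?andbT ?orbF //.
  by rewrite (disjointFr hCU xC); case: (x \in Z).
apply: (cut_char_r (X := Z0 :|: C :&: Z) (C := C :&: Z) hM); rewrite ?e2 ?e1.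
- by rewrite -e1; apply: subsetUr.
- lia.
move=> x /setIP[xC xZ]; have := hineq x xC xZ; lia.
Qed.

Lemma cover_set (T : finType) (t : seq {set T}) : cover [set A in t] = scover t.
Proof.
apply/setP => x; rewrite mem_scover; apply/bigcupP/hasP.
  by case=> A; rewrite inE => At xA; exists A.
by case=> A At xA; exists A; rewrite ?inE.
Qed.

Lemma mem_fZ (T : finType) (Z : {set T}) s X :
  (X \in fZ Z s) = [exists A, [&& A \in s, ~~ [disjoint A & Z] & X == A :&: Z]].
Proof.
apply/mapP/existsP.
  by case=> A; rewrite mem_filter => /andP[h1 h2] ->; exists A; rewrite h1 h2 eqxx.
by case=> A /and3P[h1 h2 /eqP ->]; exists A; rewrite // mem_filter h1 h2.
Qed.

Unset Implicit Arguments.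
Theorem lemma14 (T : finType) (E : {set T}) (I : {set {set T}})
    (P : {set {set T}}) (Z : {set T}) :
  is_matroid E I -> loopless E I ->
  standard_coloring E I P ->
  Z \subset E ->
  #|colors_in P Z| = rank I Z ->
  standard_coloring Z (restrict I Z) (restrict_coloring P Z).
Proof.
move=> hM _ [hcol hcard [s [hus hP hstd]]] hZE hrk.
move: hcol => /and3P[/eqP hcov htriv h0].
have hdisj : forall A B, A \in s -> B \in s -> A != B -> [disjoint A & B].
  by move=> A B hA hB; apply: (trivIsetP htriv); rewrite hP inE.
have hsE : scover s = E by rewrite -hcov hP cover_set.
have [_ h2] := key Z hM hus hdisj hstd.
rewrite hsE (setIidPl hZE) in h2.
have hfu : uniq [seq A : {set T} <- s | ~~ [disjoint A & Z]] by apply: filter_uniq.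
have hcol : colors_in P Z = [set A in [seq A : {set T} <- s | ~~ [disjoint A & Z]]].
  by apply/setP => A; rewrite /colors_in !inE mem_filter hP inE andbC.
have hsz : size (fZ Z s) = rank I Z.
  by rewrite size_map -hrk hcol cardsE; apply/esym/card_uniqP.
have hstdf := h2 (esym hsz).
have hsubZ : forall X, X \in fZ Z s -> X \subset Z.
  by move=> X; rewrite mem_fZ => /existsP[A /and3P[_ _ /eqP ->]]; apply: subsetIr.
have hfZd : forall X Y, X \in fZ Z s -> Y \in fZ Z s -> X != Y -> [disjoint X & Y].
  move=> X Y; rewrite !mem_fZ => /existsP[A /and3P[hA _ /eqP ->]].
  move=> /existsP[B /and3P[hB _ /eqP ->]] hne.
  apply: disjointW (subsetIl _ _) (subsetIl _ _) _; apply: hdisj => //.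
  by apply: contraNneq hne => ->.
have hfu' : uniq (fZ Z s).
  rewrite /fZ map_inj_in_uniq // => A B; rewrite !mem_filter => /andP[hAZ hA] /andP[hBZ hB] e.
  apply/eqP; apply/negPn/negP => hne.
  have := hdisj A B hA hB hne => hd.
  move: hAZ; rewrite -setI_eq0 => /negP; apply.
  have : [disjoint A :&: Z & B :&: Z] by apply: disjointW (subsetIl _ _) (subsetIl _ _) hd.
  by rewrite -e -setI_eq0 setIid.
have hrc : restrict_coloring P Z = [set X in fZ Z s].
  apply/setP => X; rewrite inE mem_fZ; apply/imsetP/existsP.
    case=> A; rewrite inE => /andP[hA hAZ] ->; exists A; rewrite hAZ eqxx andbT.
    by rewrite andbT; move: hA; rewrite hP inE.
  case=> A /and3P[hA hAZ /eqP ->]; exists A => //; rewrite inE hAZ hP inE hA.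
  done.
rewrite hrc; split.
- apply/and3P; split.
  + by rewrite cover_set scover_fZ hsE (setIidPl hZE).
  + by apply/trivIsetP => X Y; rewrite !inE; apply: hfZd.
  + rewrite inE mem_fZ; apply/negP => /existsP[A /and3P[_ hAZ /eqP e]].
    by move: hAZ; rewrite -setI_eq0 -e eqxx.
- by rewrite cardsE (card_uniqP hfu') hsz rank_restrict.
exists (fZ Z s); split => // i hi.
rewrite cut_restrict; first exact: hstdf.
rewrite bigcup_nth; apply/subsetP => x; rewrite mem_scover => /hasP[X hX xX].
exact: (subsetP (hsubZ X (mem_take hX))).
Qed.
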